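(* Let $G$ be a graph and let $S$ be the set of simplicial vertices of $G$. Then $S$ is a general position set of $G$.
   Context: All graphs are finite, simple and connected. A vertex is simplicial if its neighbors induce a complete subgraph. A set $S$ of vertices is a general position set of $G$ if no three vertices of $S$ lie on a common geodesic (shortest path) of $G$. *)

(* Defs.v *)
From mathcomp Require Import all_boot.
Set Implicit Arguments. Unset Strict Implicit. Unset Printing Implicit Defensive.

Definition simple_graph (T : finType) (e : rel T) : Prop :=
  symmetric e /\ irreflexive e.

Definition connected_graph (T : finType) (e : rel T) : Prop :=
  forall x y : T, connect e x y.

(* A walk starting at x is the vertex sequence x :: p with path e x p;
   its length is size p.  It is a geodesic (shortest path) if no walk
   with the same endpoints is shorter. *)
Definition geodesic (T : finType) (e : rel T) (x : T) (p : seq T) : Prop :=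
  path e x p /\
  forall q : seq T, path e x q -> last x q = last x p -> size p <= size q.

Definition simplicial (T : finType) (e : rel T) (v : T) : bool :=
  [forall x, forall y, (e v x && e v y && (x != y)) ==> e x y].

Definition simplicial_set (T : finType) (e : rel T) : {set T} :=
  [set v | simplicial e v].

Definition general_position (T : finType) (e : rel T) (S : {set T}) : Prop :=
  forall (x : T) (p : seq T) (a b c : T),
    geodesic e x p ->
    a \in S -> b \in S -> c \in S ->
    a != b -> b != c -> a != c ->
    a \in x :: p -> b \in x :: p -> c \in x :: p -> False.

(* Main.v *)
Require Import Defs.
From mathcomp Require Import all_boot.
From mathcomp Require Import zify.

Lemma mid_not_simpl (T : finType) (e : rel T) : symmetric e ->
  forall x p1 v w p2, geodesic e x (p1 ++ v :: w :: p2) -> simplicial e v -> False.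
Proof.
move=> sym x p1 v w p2 [pth min] simp.
rewrite cat_path /= in pth.
case/andP: pth => P1 /andP [Euv /andP [Evw P2]].
case: (eqVneq (last x p1) w) => Huw.
  have := min (p1 ++ p2).
  rewrite cat_path Huw P1 P2 !last_cat /= Huw => /(_ isT erefl).
  rewrite !size_cat /=; lia.
move/forallP: simp => /(_ (last x p1)) /forallP /(_ w).
rewrite sym Euv Evw Huw /= => Euw.
have := min (p1 ++ w :: p2).
rewrite cat_path /= P1 Euw P2 !last_cat /= => /(_ isT erefl).
rewrite !size_cat /=; lia.
Qed.

Lemma simpl_index (T : finType) (e : rel T) : symmetric e ->
  forall x p b, geodesic e x p -> simplicial e b -> b \in x :: p ->
  index b (x :: p) = 0 \/ index b (x :: p) = size p.
Proof.
move=> sym x p b g sb bin.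
set i := index b (x :: p).
have ilt : i < (size p).+1 by rewrite -[(size p).+1]/(size (x :: p)) index_mem.
case: (posnP i) => [->|ipos]; first by left.
case: (eqVneq i (size p)) => [->|ine]; first by right.
exfalso.
have nb : nth x p i.-1 = b.
  have := nth_index x bin; rewrite -/i.
  by case: i ipos ilt ine => [|j] //=.
have h1 : i.-1 < size p by lia.
have h2 : i < size p by lia.
have ep : p = take i.-1 p ++ nth x p i.-1 :: nth x p i :: drop i.+1 p.
  rewrite -(drop_nth x h2).
  have -> : i = (i.-1).+1 by lia.
  by rewrite -(drop_nth x h1) cat_take_drop.
rewrite ep nb in g.
exact: (mid_not_simpl _ _ sym _ _ _ _ _ g sb).
Qed.

Theorem lemma3p5 (T : finType) (e : rel T) :
  simple_graph e -> connected_graph e ->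
  general_position e (simplicial_set e).
Proof.
move=> [sym irr] _ x p a b c g aS bS cS ab bc ac ain bin cin.
rewrite !inE in aS bS cS.
have ha := simpl_index _ _ sym _ _ _ g aS ain.
have hb := simpl_index _ _ sym _ _ _ g bS bin.
have hc := simpl_index _ _ sym _ _ _ g cS cin.
have inj : forall y z, y \in x :: p -> z \in x :: p ->
    index y (x :: p) = index z (x :: p) -> y = z.
  move=> y z yi zi E.
  by rewrite -(nth_index x yi) -(nth_index x zi) E.
case: ha hb hc => ha [] hb [] hc.
all: first [ by move/eqP: ab; apply; apply: inj; rewrite ?ha ?hb
           | by move/eqP: bc; apply; apply: inj; rewrite ?hc ?hb
           | by move/eqP: ac; apply; apply: inj; rewrite ?ha ?hc ].
Qed.
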